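(* Let $G=(V,E)$ be $(2,2)$-$C_i$-tight and let $v\in V$ have degree 3 with $N(v)\cap N(v')=\emptyset$. Then either $G[N(v)\cup\{v\}]\cong K_4$, or there exist $x,y\in N(v)$ with $xy\notin E$ such that $G-\{v,v'\}+\{xy,x'y'\}$ is $(2,2)$-$C_i$-tight.
   Context: A $\mathbb{Z}_2$-symmetric graph is a finite simple graph $G=(V,E)$ with an automorphism $\theta$, $\theta^2=\mathrm{id}$; write $v'=\theta(v)$. A vertex is fixed if $v'=v$; an edge $uv$ is fixed if $\{u',v'\}=\{u,v\}$. $G$ is $(2,2)$-sparse if every subgraph $(V',E')$ with $V'\ne\emptyset$ has $|E'|\le2|V'|-2$, $(2,2)$-tight if also $|E|=2|V|-2$. $G$ is $(2,2)$-$C_i$-tight if it is $(2,2)$-tight and $\theta$ fixes no vertex and no edge. $N(v)$ is the set of neighbours of $v$; $G-\{v,v'\}+\{xy,x'y'\}$ denotes deleting $v,v'$ and adding edges $xy,x'y'$, with the restricted involution. *)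

(* Defs.v *)
From mathcomp Require Import all_boot.
Set Implicit Arguments. Unset Strict Implicit. Unset Printing Implicit Defensive.

Definition simple_graph (T : finType) (V : {set T}) (E : {set {set T}}) : Prop :=
  forall e, e \in E -> e \subset V /\ #|e| = 2.

(* Z2-symmetric graph: th is an involution of V (given as a global involution
   of T preserving V) that is a graph automorphism. *)
Definition Z2_graph (T : finType) (V : {set T}) (E : {set {set T}}) (th : T -> T) : Prop :=
  [/\ simple_graph V E,
      (forall x, th (th x) = x),
      (forall x, (th x \in V) = (x \in V)) &
      (forall e : {set T}, (th @: e \in E) = (e \in E))].

Definition sparse22 (T : finType) (V : {set T}) (E : {set {set T}}) : Prop :=
  forall (V' : {set T}) (E' : {set {set T}}),
    V' != set0 -> V' \subset V -> E' \subset E ->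
    (forall e, e \in E' -> e \subset V') ->
    (#|E'| + 2 <= 2 * #|V'|)%N.

Definition tight22 (T : finType) (V : {set T}) (E : {set {set T}}) : Prop :=
  sparse22 V E /\ (#|E| + 2 = 2 * #|V|)%N.

Definition Ci_tight (T : finType) (V : {set T}) (E : {set {set T}}) (th : T -> T) : Prop :=
  [/\ Z2_graph V E th, tight22 V E,
      (forall x, x \in V -> th x != x) &
      (forall e : {set T}, e \in E -> th @: e != e)].

Definition nbhd (T : finType) (V : {set T}) (E : {set {set T}}) (v : T) : {set T} :=
  [set u in V | [set v; u] \in E].

Definition induced_iso_K4 (T : finType) (E : {set {set T}}) (S : {set T}) : Prop :=
  exists f : 'I_4 -> T,
    [/\ injective f, f @: setT = S &
        (forall i j : 'I_4, i != j -> [set f i; f j] \in E)].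

Definition red_V (T : finType) (V : {set T}) (th : T -> T) (v : T) : {set T} :=
  V :\: [set v; th v].
Definition red_E (T : finType) (V : {set T}) (E : {set {set T}}) (th : T -> T)
    (v x y : T) : {set {set T}} :=
  [set e in E | e \subset red_V V th v] :|: [set [set x; y]; [set th x; th y]].

(* Main.v *)
Require Import Defs.
From mathcomp Require Import all_boot.
From mathcomp.zify Require Import zify_ssreflect.
Set Implicit Arguments. Unset Strict Implicit. Unset Printing Implicit Defensive.

Lemma K4_lem (T : finType) (E : {set {set T}}) (v a b c : T) :
  v != a -> v != b -> v != c -> a != b -> a != c -> b != c ->
  [set v; a] \in E -> [set v; b] \in E -> [set v; c] \in E ->
  [set a; b] \in E -> [set a; c] \in E -> [set b; c] \in E ->
  induced_iso_K4 E (v |: [set a; b; c]).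
Proof.
move=> va vb vc ab ac bc e1 e2 e3 e4 e5 e6.
exists (fun i : 'I_4 => nth v [:: v; a; b; c] i); split.
- move=> [i Hi] [j Hj] /= h; apply/val_inj => /=; move: Hi Hj h.
  do 4?[case: i => [|i]]; do 4?[case: j => [|j]] => //= _ _ h;
  by move: va vb vc ab ac bc; rewrite h eqxx.
- apply/setP=> w; rewrite !inE; apply/imsetP/idP.
    case=> [[i Hi]] _ ->; move: Hi.
    by do 4?[case: i => [|i]] => //= _; rewrite eqxx ?orbT.
  rewrite -!orbA => /or4P[]/eqP->.
  + by exists (Ordinal (isT : 0 < 4)).
  + by exists (Ordinal (isT : 1 < 4)).
  + by exists (Ordinal (isT : 2 < 4)).
  + by exists (Ordinal (isT : 3 < 4)).
- move=> [i Hi] [j Hj]; move: Hi Hj.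
  do 4?[case: i => [|i]]; do 4?[case: j => [|j]] => //= _ _ _;
  by rewrite ?e1 ?e2 ?e3 ?e4 ?e5 ?e6 // setUC ?e1 ?e2 ?e3 ?e4 ?e5 ?e6.
Qed.

Lemma card3_ex (T : finType) (A : {set T}) : #|A| = 3 ->
  exists a b c, [/\ a != b, a != c, b != c & A = [set a; b; c]].
Proof.
move=> H3; have : 0 < #|A| by rewrite H3.
case/card_gt0P=> a aA.
have : #|A :\ a| == 2 by move: H3; rewrite (cardsD1 a A) aA; case: #|A :\ a| => // [[|[|]]].
case/cards2P=> b [c [bc Hbc]].
have bA : b \in A :\ a by rewrite Hbc !inE eqxx.
have cA : c \in A :\ a by rewrite Hbc !inE eqxx orbT.
exists a, b, c; split=> //.
- by move: bA; rewrite !inE eq_sym => /andP[].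
- by move: cA; rewrite !inE eq_sym => /andP[].
- apply/setP=> w; rewrite !inE -orbA; case: (boolP (w == a)) => [/eqP->|wa]; first by rewrite aA.
  have := congr1 (fun S : {set T} => w \in S) Hbc; rewrite !inE wa /= => ->.
  by [].
Qed.

Section Basics.
Variables (T : finType) (V : {set T}) (E : {set {set T}}) (th : T -> T).
Hypothesis Hsimple : simple_graph V E.
Hypothesis Hinv : forall x, th (th x) = x.
Hypothesis HV : forall x, (th x \in V) = (x \in V).
Hypothesis HE : forall e : {set T}, (th @: e \in E) = (e \in E).
Hypothesis Hsp : sparse22 V E.

Definition edg (X : {set T}) := [set e in E | e \subset X].
Definition ec (X : {set T}) := #|edg X|.
Definition cross (X Y : {set T}) :=
  [set e in E | [&& e \subset X :|: Y, ~~ (e \subset X) & ~~ (e \subset Y)]].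

Lemma th_inj : injective th.
Proof. exact: (can_inj Hinv). Qed.

Lemma mem_thS (X : {set T}) x : (x \in th @: X) = (th x \in X).
Proof. by rewrite -{1}(Hinv x) (mem_imset _ _ th_inj). Qed.

Lemma thK_set (X : {set T}) : th @: (th @: X) = X.
Proof. by apply/setP=> x; rewrite !mem_thS Hinv. Qed.

Lemma th_set2 x y : th @: [set x; y] = [set th x; th y].
Proof. by rewrite imsetU1 imset_set1. Qed.

Lemma edge_th x y : ([set th x; th y] \in E) = ([set x; y] \in E).
Proof. by rewrite -th_set2 HE. Qed.

Lemma card_th (X : {set T}) : #|th @: X| = #|X|.
Proof. exact: card_imset th_inj. Qed.

Lemma sp (X : {set T}) : X \subset V -> X != set0 -> ec X + 2 <= 2 * #|X|.
Proof.
move=> XV X0; apply: Hsp => //.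
  by apply/subsetP=> e; rewrite inE => /andP[].
by move=> e; rewrite inE => /andP[].
Qed.

Lemma ec_th (X : {set T}) : ec X <= ec (th @: X).
Proof.
rewrite /ec; have <- := card_imset (edg X) (can_inj (f := fun Z : {set T} => th @: Z) (g := fun Z => th @: Z) thK_set).
apply: subset_leq_card; apply/subsetP=> e' /imsetP[e]; rewrite inE => /andP[eE eX] ->.
rewrite inE HE eE /=; apply/subsetP=> w; rewrite !mem_thS; exact: (subsetP eX).
Qed.

Lemma ec_mono (X Y : {set T}) : X \subset Y -> ec X <= ec Y.
Proof.
move=> XY; apply: subset_leq_card; apply/subsetP=> e; rewrite !inE => /andP[-> /=].
by move/subset_trans; apply.
Qed.

Lemma sup (X Y : {set T}) : ec (X :|: Y) + ec (X :&: Y) = ec X + ec Y + #|cross X Y|.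
Proof.
have e1 : edg (X :|: Y) = (edg X :|: edg Y) :|: cross X Y.
  apply/setP=> e; rewrite !inE; case: (e \in E) => //=.
  case hX: (e \subset X); first by rewrite (subset_trans hX (subsetUl X Y)).
  case hY: (e \subset Y); first by rewrite (subset_trans hY (subsetUr X Y)).
  by rewrite /= andbT.
have e2 : edg X :&: edg Y = edg (X :&: Y).
  by apply/setP=> e; rewrite !inE subsetI; case: (e \in E).
have e3 : (edg X :|: edg Y) :&: cross X Y = set0.
  apply/setP=> e; rewrite !inE; case: (e \in E) => //=.
  by case: (e \subset X); case: (e \subset Y); rewrite ?andbF.
have := cardsUI (edg X :|: edg Y) (cross X Y); rewrite e3 cards0 addn0 -e1.
have := cardsUI (edg X) (edg Y); rewrite e2 /ec; lia.
Qed.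

Lemma supW (X Y : {set T}) : ec X + ec Y <= ec (X :|: Y) + ec (X :&: Y).
Proof. rewrite sup; lia. Qed.

Lemma add_vertex (X S : {set T}) w : w \notin X -> S \subset X ->
  (forall u, u \in S -> [set w; u] \in E) -> ec X + #|S| <= ec (w |: X).
Proof.
move=> wX SX Hw.
have inj : {in S &, injective (fun u => [set w; u])}.
  move=> u1 u2 u1S u2S h.
  have : u1 \in [set w; u2] by rewrite -h !inE eqxx orbT.
  rewrite !inE => /orP[/eqP u1w|/eqP //].
  by move: wX; rewrite -u1w (subsetP SX).
have dis : edg X :&: [set [set w; u] | u in S] = set0.
  apply/setP=> e; rewrite !inE; apply/negbTE; apply/negP=> /andP[/andP[_ eX] /imsetP[u _ eu]].
  by move: wX; rewrite (subsetP eX) // eu !inE eqxx.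
have := cardsUI (edg X) [set [set w; u] | u in S]; rewrite dis cards0 addn0 (card_in_imset inj).
move=> <-; apply: subset_leq_card; apply/subsetP=> e; rewrite !inE => /orP[/andP[-> eX]|].
  by rewrite (subset_trans eX (subsetUr _ _)).
move=> /imsetP[u uS ->]; rewrite Hw //=; apply/subsetP=> z; rewrite !inE.
by case/orP=> [->//|/eqP->]; rewrite (subsetP SX) ?orbT.
Qed.

End Basics.

Section Vsec.
Variables (T : finType) (V : {set T}) (E : {set {set T}}) (th : T -> T).
Hypothesis Hsimple : simple_graph V E.
Hypothesis Hinv : forall x, th (th x) = x.
Hypothesis HV : forall x, (th x \in V) = (x \in V).
Hypothesis HE : forall e : {set T}, (th @: e \in E) = (e \in E).
Hypothesis Hsp : sparse22 V E.
Hypothesis Hfv : forall x, x \in V -> th x != x.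
Hypothesis Hfe : forall e : {set T}, e \in E -> th @: e != e.
Variable v : T.
Hypothesis Hv : v \in V.
Hypothesis Hdisj : nbhd V E v :&: nbhd V E (th v) = set0.

Local Notation N := (nbhd V E v).
Local Notation W := (red_V V th v).
Local Notation ec := (ec E).
Local Notation mem_thS := (mem_thS Hinv).

Lemma card2_edge e : e \in E -> #|e| = 2.
Proof. by move/Hsimple=> []. Qed.

Lemma ec0 : ec set0 = 0.
Proof.
apply/eqP; rewrite cards_eq0; apply/eqP/setP=> e; rewrite !inE.
apply/negbTE/negP=> /andP[eE]; rewrite subset0 => /eqP e0.
by move: (card2_edge eE); rewrite e0 cards0.
Qed.

Lemma nb_edge u : u \in N -> [set v; u] \in E.
Proof. by rewrite inE => /andP[]. Qed.

Lemma nb_V u : u \in N -> u \in V.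
Proof. by rewrite inE => /andP[]. Qed.

Lemma nb_th u : u \in N -> th u \in nbhd V E (th v).
Proof. by move=> uN; rewrite inE HV nb_V //= edge_th ?nb_edge. Qed.

Lemma nb_notth u : u \in N -> th u \notin N.
Proof.
move=> uN; apply/negP=> h.
have : th u \in N :&: nbhd V E (th v) by rewrite inE h nb_th.
by rewrite Hdisj inE.
Qed.

Lemma thv_v : th v != v.
Proof. exact: Hfv. Qed.

Lemma nb_neq_v u : u \in N -> u != v.
Proof.
move=> uN; apply/eqP=> uv; move: (card2_edge (nb_edge uN)).
by rewrite uv cards2 eqxx.
Qed.

Lemma nb_neq_thv u : u \in N -> u != th v.
Proof.
move=> /nb_edge uE; apply/negP=> /eqP eu; move: (Hfe uE).
by rewrite eu th_set2 Hinv setUC eqxx.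
Qed.

Lemma memW w : (w \in W) = [&& w != v, w != th v & w \in V].
Proof. by rewrite /red_V !inE negb_or andbA. Qed.

Lemma memW_th w : (th w \in W) = (w \in W).
Proof.
rewrite !memW HV.
have h1 : (th w != v) = (w != th v) by rewrite -{1}(Hinv v) (inj_eq (can_inj Hinv)).
have h2 : (th w != th v) = (w != v) by rewrite (inj_eq (can_inj Hinv)).
by rewrite h1 h2 andbCA.
Qed.

Lemma v_notW : v \notin W. Proof. by rewrite memW eqxx. Qed.
Lemma thv_notW : th v \notin W. Proof. by rewrite memW eqxx andbF. Qed.

Lemma nb_W u : u \in N -> u \in W.
Proof. by move=> uN; rewrite memW nb_neq_v ?nb_neq_thv ?nb_V. Qed.

Lemma nb_thW u : u \in N -> th u \in W.
Proof. by move=> uN; rewrite memW_th nb_W. Qed.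

Lemma W_V : W \subset V.
Proof. by apply/subsetP=> w; rewrite memW => /and3P[]. Qed.

Lemma F2 (X : {set T}) x : X \subset W -> x \in X -> ec X + 2 <= 2 * #|X|.
Proof.
move=> XW xX; apply: (sp Hsp); first exact: subset_trans XW W_V.
by apply/set0Pn; exists x.
Qed.

Lemma card3 (s t u : T) : s != t -> s != u -> t != u -> #|[set s; t; u]| = 3.
Proof.
move=> st su tu; rewrite setUC cardsU1 cards2 st !inE negb_or eq_sym su eq_sym tu.
by [].
Qed.

Lemma in3 (s t u w : T) : (w \in [set s; t; u]) = [|| w == s, w == t | w == u].
Proof. by rewrite !inE orbA. Qed.

Lemma F3 (X : {set T}) s t u : s \in N -> t \in N -> u \in N -> s != t -> s != u -> t != u ->
  X \subset W -> s \in X -> t \in X -> u \in X -> ec X + 3 <= 2 * #|X|.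
Proof.
move=> sN tN uN st su tu XW sX tX uX.
have vX : v \notin X by apply: contra v_notW; apply: (subsetP XW).
have := add_vertex (S := [set s; t; u]) vX.
rewrite card3 //; move/(_ _)/(_ _)=> h.
have {h} h : ec X + 3 <= ec (v |: X).
  apply: h; first by apply/subsetP=> w; rewrite in3 => /or3P[]/eqP->.
  by move=> w; rewrite in3 => /or3P[]/eqP->; apply: nb_edge.
have := @sp _ _ _ Hsp (v |: X).
rewrite cardsU1 vX add1n; move/(_ _)/(_ _) => h2.
have : ec (v |: X) + 2 <= 2 * (#|X|.+1).
  apply: h2; last by apply/set0Pn; exists v; rewrite !inE eqxx.
  by rewrite subUset sub1set Hv (subset_trans XW W_V).
move: h; clear; lia.
Qed.

Lemma F4 (X : {set T}) s t u : s \in N -> t \in N -> u \in N -> s != t -> s != u -> t != u ->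
  X \subset W -> s \in X -> t \in X -> u \in X ->
  th s \in X -> th t \in X -> th u \in X -> ec X + 4 <= 2 * #|X|.
Proof.
move=> sN tN uN st su tu XW sX tX uX sX' tX' uX'.
have vX : v \notin X by apply: contra v_notW; apply: (subsetP XW).
have h1 : ec X + 3 <= ec (v |: X).
  have := add_vertex (S := [set s; t; u]) vX; rewrite card3 //; apply.
    by apply/subsetP=> w; rewrite in3 => /or3P[]/eqP->.
  by move=> w; rewrite in3 => /or3P[]/eqP->; apply: nb_edge.
have vX' : th v \notin v |: X.
  by rewrite !inE negb_or thv_v /=; apply: contra thv_notW; apply: (subsetP XW).
have ti := inj_eq (can_inj Hinv).
have h2 : ec (v |: X) + 3 <= ec (th v |: (v |: X)).
  have := add_vertex (S := [set th s; th t; th u]) vX'; rewrite card3 ?ti //; apply.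
    by apply/subsetP=> w; rewrite in3 => /or3P[]/eqP->; rewrite !inE ?sX' ?tX' ?uX' orbT.
  by move=> w; rewrite in3 => /or3P[]/eqP->; rewrite edge_th // nb_edge.
have := @sp _ _ _ Hsp (th v |: (v |: X)).
rewrite cardsU1 vX' cardsU1 vX !add1n; move/(_ _)/(_ _) => h3.
have : ec (th v |: (v |: X)) + 2 <= 2 * (#|X|.+2).
  apply: h3; last by apply/set0Pn; exists v; rewrite !inE eqxx orbT.
  by rewrite !subUset !sub1set Hv HV Hv (subset_trans XW W_V).
move: h1 h2; clear; lia.
Qed.


Definition Tb x y (Y : {set T}) :=
  [/\ Y \subset W, x \in Y, y \in Y & 2 * #|Y| <= ec Y + 2].
Definition Qb x y z (Y : {set T}) :=
  [/\ Y \subset W, [/\ x \in Y, y \in Y, th x \in Y & th y \in Y], z \notin Y, th z \notin Y &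
      2 * #|Y| <= ec Y + 3].

Lemma Tsym x y Y : Tb x y Y -> Tb y x Y.
Proof. by case. Qed.
Lemma Qsym x y z Y : Qb x y z Y -> Qb y x z Y.
Proof. by move=> [YW [a b c d] e f g]; split. Qed.

Lemma thW (Y : {set T}) : Y \subset W -> th @: Y \subset W.
Proof. by move=> YW; apply/subsetP=> w; rewrite mem_thS -memW_th; apply: (subsetP YW). Qed.

Lemma UW (A B : {set T}) : A \subset W -> B \subset W -> A :|: B \subset W.
Proof. by move=> *; rewrite subUset; apply/andP. Qed.
Lemma IW (A B : {set T}) : A \subset W -> A :&: B \subset W.
Proof. by move=> AW; rewrite subIset // AW. Qed.
Lemma IW' (A B : {set T}) : B \subset W -> A :&: B \subset W.
Proof. by move=> BW; rewrite subIset // BW orbT. Qed.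

Ltac mm := do 3 rewrite ?mem_thS ?Hinv ?inE;
  repeat match goal with
  | H : is_true (?x \in ?A) |- context [?x \in ?A] => rewrite H /=
  | H : is_true (~~ (?x \in ?A)) |- context [?x \in ?A] => rewrite (negbTE H) /=
  end; rewrite ?eqxx ?orbT ?andbT ?orTb ?andTb //=.

Section Triple.
Variables s t u : T.
Hypotheses (sN : s \in N) (tN : t \in N) (uN : u \in N) (st : s != t) (su : s != u) (tu : t != u).

Lemma TT Y1 Y2 : Tb s t Y1 -> Tb s u Y2 -> False.
Proof.
case=> Y1W s1 t1 h1 [Y2W s2 u2 h2].
have hU : ec (Y1 :|: Y2) + 3 <= 2 * #|Y1 :|: Y2|.
  by apply: (F3 sN tN uN st su tu (UW Y1W Y2W)); mm.
have hI : ec (Y1 :&: Y2) + 2 <= 2 * #|Y1 :&: Y2|.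
  by apply: (F2 (IW _ Y1W)) (_ : s \in _); mm.
have hs := supW E Y1 Y2; have hc := cardsUI Y1 Y2.
move: hU hI hs hc h1 h2; clear; lia.
Qed.


Lemma TQ Y1 Y2 : Tb s t Y1 -> Qb s u t Y2 -> False.
Proof.
move=> HT1; case: (HT1) => Y1W s1 t1 h1 [Y2W [s2 u2 s2' u2'] _ _ h2].
have hU : ec (Y1 :|: Y2) + 3 <= 2 * #|Y1 :|: Y2|.
  by apply: (F3 sN tN uN st su tu (UW Y1W Y2W)); mm.
have hI : ec (Y1 :&: Y2) + 2 <= 2 * #|Y1 :&: Y2|.
  by apply: (F2 (IW _ Y1W)) (_ : s \in _); mm.
have hs := supW E Y1 Y2; have hc := cardsUI Y1 Y2.
set U := Y1 :|: Y2.
have dU : 2 * #|U| <= ec U + 3.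
  by rewrite /U; move: hU hI hs hc h1 h2; clear; lia.
have UW' : U \subset W := UW Y1W Y2W.
have hU2 : ec (U :|: th @: U) + 4 <= 2 * #|U :|: th @: U|.
  apply: (F4 sN tN uN st su tu (UW UW' (thW UW'))); rewrite /U; mm.
have hs2 := supW E U (th @: U); have hc2 := cardsUI U (th @: U).
have ht := ec_th Hinv HE U; have hct := card_th Hinv U.
have : Tb s u (U :&: th @: U).
  split; [exact: IW | rewrite /U; mm | rewrite /U; mm | ].
  by move: dU hU2 hs2 hc2 ht hct; clear; lia.
exact: TT HT1.
Qed.


Lemma neq_edges : [set t; u] != [set th t; th u].
Proof.
apply/eqP=> h; have : t \in [set th t; th u] by rewrite -h !inE eqxx.
rewrite !inE => /orP[/eqP h'|/eqP h'].
  by move: (Hfv (nb_V tN)); rewrite -h' eqxx.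
by move: (nb_notth uN); rewrite -h' tN.
Qed.

Lemma QQe Y1 Y2 : Qb s t u Y1 -> Qb s u t Y2 -> [set t; u] \in E -> False.
Proof.
case=> Y1W [s1 t1 s1' t1'] u1 u1' h1 [Y2W [s2 u2 s2' u2'] t2 t2' h2] tuE.
have hC : 2 <= #|cross E Y1 Y2|.
  have <- : #|[set [set t; u]; [set th t; th u]]| = 2 by rewrite cards2 neq_edges.
  apply: subset_leq_card; apply/subsetP=> e; rewrite !inE => /orP[]/eqP->;
    rewrite ?(edge_th HE) tuE /= !subUset !sub1set; mm.
have hU : ec (Y1 :|: Y2) + 4 <= 2 * #|Y1 :|: Y2|.
  by apply: (F4 sN tN uN st su tu (UW Y1W Y2W)); mm.
have hI : ec (Y1 :&: Y2) + 2 <= 2 * #|Y1 :&: Y2|.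
  by apply: (F2 (IW _ Y1W)) (_ : s \in _); mm.
have hs := sup E Y1 Y2; have hc := cardsUI Y1 Y2.
move: hU hI hs hc h1 h2 hC; clear; lia.
Qed.

Lemma T1 Y : Tb s t Y -> [set s; u] \in E -> [set t; u] \in E -> False.
Proof.
case=> YW s1 t1 h1 suE tuE.
have uY : u \notin Y.
  apply/negP=> uY; have := F3 sN tN uN st su tu YW s1 t1 uY.
  by move: h1; clear; lia.
have ha : ec Y + #|[set s; t]| <= ec (u |: Y).
  apply: (add_vertex uY); first by rewrite subUset !sub1set s1 t1.
  by move=> w; rewrite !inE => /orP[]/eqP->; rewrite setUC.
have hF : ec (u |: Y) + 3 <= 2 * #|u |: Y|.
  apply: (F3 sN tN uN st su tu); mm.
  by rewrite subUset sub1set nb_W.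
move: ha hF h1; rewrite (cardsU1 u Y) (negbTE uY) cards2 st; clear; lia.
Qed.

Lemma Q1 Y : Qb s t u Y -> [set s; u] \in E -> [set t; u] \in E -> False.
Proof.
case=> YW [s1 t1 s1' t1'] uY uY' h1 suE tuE.
have ha : ec Y + #|[set s; t]| <= ec (u |: Y).
  apply: (add_vertex uY); first by rewrite subUset !sub1set s1 t1.
  by move=> w; rewrite !inE => /orP[]/eqP->; rewrite setUC.
have uX : th u \notin u |: Y.
  by rewrite !inE negb_or (Hfv (nb_V uN)) uY'.
have hb : ec (u |: Y) + #|[set th s; th t]| <= ec (th u |: (u |: Y)).
  apply: (add_vertex uX); first by rewrite subUset !sub1set; mm.
  by move=> w; rewrite !inE => /orP[]/eqP->; rewrite setUC (edge_th HE).
have hF : ec (th u |: (u |: Y)) + 4 <= 2 * #|th u |: (u |: Y)|.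
  apply: (F4 sN tN uN st su tu); mm.
  by rewrite !subUset !sub1set (nb_W uN) (nb_thW uN) YW.
move: ha hb hF h1; rewrite (cardsU1 (th u)) (negbTE uX) (cardsU1 u Y) (negbTE uY) cards2 st cards2 (inj_eq (can_inj Hinv)) st.
clear; lia.
Qed.


Lemma D3 (A B C : {set T}) w : A \subset W -> B \subset W -> C \subset W ->
  2 * #|A| <= ec A + 3 -> 2 * #|B| <= ec B + 3 -> 2 * #|C| <= ec C + 3 ->
  w \in A -> w \in B ->
  s \in (A :|: B) :|: C -> t \in (A :|: B) :|: C -> u \in (A :|: B) :|: C ->
  th s \in (A :|: B) :|: C -> th t \in (A :|: B) :|: C -> th u \in (A :|: B) :|: C ->
  2 * #|(A :|: B) :&: C| <= ec ((A :|: B) :&: C) + 3.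
Proof.
move=> AW BW CW hA hB hC wA wB m1 m2 m3 m4 m5 m6.
have h6 := F4 sN tN uN st su tu (UW (UW AW BW) CW) m1 m2 m3 m4 m5 m6.
have hI : ec (A :&: B) + 2 <= 2 * #|A :&: B|.
  by apply: (F2 (IW _ AW)) (_ : w \in _); mm.
have s1 := supW E A B; have s2 := supW E (A :|: B) C.
have c1 := cardsUI A B; have c2 := cardsUI (A :|: B) C.
move: h6 hI s1 s2 c1 c2 hA hB hC; clear; lia.
Qed.

Lemma QQQ Y1 Y2 Y3 : Qb s t u Y1 -> Qb s u t Y2 -> Qb t u s Y3 -> False.
Proof.
case=> Y1W [s1 t1 s1' t1'] u1 u1' h1 [Y2W [s2 u2 s2' u2'] t2 t2' h2]
  [Y3W [t3 u3 t3' u3'] s3 s3' h3].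
have tri w : w \in Y1 -> w \in Y2 -> w \in Y3 -> False.
  move=> w1 w2 w3.
  have hP : 2 * #|Y2 :&: Y3| <= ec (Y2 :&: Y3) + 2.
    have hU : ec (Y2 :|: Y3) + 4 <= 2 * #|Y2 :|: Y3|.
      by apply: (F4 sN tN uN st su tu (UW Y2W Y3W)); mm.
    have := supW E Y2 Y3; have := cardsUI Y2 Y3.
    by move: hU h2 h3; clear; lia.
  have hU : ec (Y1 :|: (Y2 :&: Y3)) + 4 <= 2 * #|Y1 :|: (Y2 :&: Y3)|.
    by apply: (F4 sN tN uN st su tu (UW Y1W (IW _ Y2W))); mm.
  have hI : ec (Y1 :&: (Y2 :&: Y3)) + 2 <= 2 * #|Y1 :&: (Y2 :&: Y3)|.
    by apply: (F2 (IW _ Y1W)) (_ : w \in _); mm.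
  have := supW E Y1 (Y2 :&: Y3); have := cardsUI Y1 (Y2 :&: Y3).
  by move: hU hI hP h1; clear; lia.
have hX : 2 * #|(Y2 :|: Y3) :&: Y1| <= ec ((Y2 :|: Y3) :&: Y1) + 3.
  by apply: (D3 (w := u) Y2W Y3W Y1W); mm.
have hY : 2 * #|(Y1 :|: Y3) :&: Y2| <= ec ((Y1 :|: Y3) :&: Y2) + 3.
  by apply: (D3 (w := t) Y1W Y3W Y2W); mm.
have hZ : 2 * #|(Y1 :|: Y2) :&: Y3| <= ec ((Y1 :|: Y2) :&: Y3) + 3.
  by apply: (D3 (w := s) Y1W Y2W Y3W); mm.
rewrite setIUl in hZ.
have dis : (Y1 :&: Y3) :&: (Y2 :&: Y3) = set0.
  apply/eqP; rewrite -subset0; apply/subsetP=> w.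
  rewrite !inE => /andP[/andP[w1 w3] /andP[w2 _]]; case: (tri w w1 w2 w3).
have hs := sup E (Y1 :&: Y3) (Y2 :&: Y3); rewrite dis ec0 in hs.
have hc := cardsUI (Y1 :&: Y3) (Y2 :&: Y3); rewrite dis cards0 in hc.
have f1 : ec (Y1 :&: Y3) + 2 <= 2 * #|Y1 :&: Y3|.
  by apply: (F2 (IW _ Y1W)) (_ : t \in _); mm.
have f2 : ec (Y2 :&: Y3) + 2 <= 2 * #|Y2 :&: Y3|.
  by apply: (F2 (IW _ Y2W)) (_ : u \in _); mm.
set X := (Y2 :|: Y3) :&: Y1; set Y := (Y1 :|: Y3) :&: Y2.
have hsub : cross E (Y1 :&: Y3) (Y2 :&: Y3) \subset cross E X Y.
  apply/subsetP=> e; rewrite !inE => /andP[eE /and3P[eU n13 n23]].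
  rewrite eE /=; apply/and3P; split.
  - apply: (subset_trans eU); apply/subsetP=> w; rewrite /X /Y !inE.
    by case/orP=> /andP[-> ->]; rewrite ?orbT.
  - case/subsetPn: n13 => w we wn; move: (subsetP eU w we); rewrite inE (negbTE wn) /= => w23.
    apply/subsetPn; exists w => //; rewrite /X inE; apply/negP=> /andP[_ w1].
    by move: w23; rewrite inE => /andP[w2 w3]; case: (tri w w1 w2 w3).
  - case/subsetPn: n23 => w we wn; move: (subsetP eU w we); rewrite inE (negbTE wn) orbF => w13.
    apply/subsetPn; exists w => //; rewrite /Y inE; apply/negP=> /andP[_ w2].
    by move: w13; rewrite inE => /andP[w1 w3]; case: (tri w w1 w2 w3).
have hcr := subset_leq_card hsub.
have hU : ec (X :|: Y) + 4 <= 2 * #|X :|: Y|.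
  apply: (F4 sN tN uN st su tu); rewrite /X /Y; mm.
  by apply: UW; apply: IW'.
have hI : ec (X :&: Y) + 2 <= 2 * #|X :&: Y|.
  by apply: (F2 (IW _ (IW' _ Y1W))) (_ : s \in _); rewrite /X /Y; mm.
have hs2 := sup E X Y; have hc2 := cardsUI X Y.
move: hU hI hs2 hc2 hX hY hZ hs hc f1 f2 hcr; rewrite -/X -/Y; clear; lia.
Qed.

End Triple.

Definition Fl x y (Y : {set T}) := [set e in [set [set x; y]; [set th x; th y]] | e \subset Y].
Definition good x y := [forall Y : {set T}, (Y \subset W) ==> (Y != set0) ==>
  (ec Y + #|Fl x y Y| + 2 <= 2 * #|Y|)].

Lemma sub2 (x y : T) (Y : {set T}) : ([set x; y] \subset Y) = (x \in Y) && (y \in Y).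
Proof. by rewrite subUset !sub1set. Qed.

Lemma Fl_bound x y Y : #|Fl x y Y| <= (x \in Y) && (y \in Y) + (th x \in Y) && (th y \in Y).
Proof.
set A := (x \in Y) && (y \in Y); set B := (th x \in Y) && (th y \in Y).
have key : Fl x y Y \subset (if A then [set [set x; y]] else set0) :|:
                          (if B then [set [set th x; th y]] else set0).
  apply/subsetP=> e; rewrite !inE => /andP[/orP[/eqP->|/eqP->]]; rewrite sub2 => h.
    by rewrite /A h inE eqxx.
  by rewrite /B h inE eqxx orbT.
apply: (leq_trans (subset_leq_card key)); clear key.
have := cardsUI (if A then [set [set x; y]] else set0) (if B then [set [set th x; th y]] else set0).
by case: A; case: B; rewrite ?cards1 ?cards0 => /=; lia.
Qed.

Lemma norm x y z (Y : {set T}) : x \in N -> y \in N -> z \in N -> x != y -> x != z -> y != z ->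
  Y \subset W -> Y != set0 -> ~~ (ec Y + #|Fl x y Y| + 2 <= 2 * #|Y|) ->
  (exists Y, Tb x y Y) \/ (exists Y, Qb x y z Y).
Proof.
move=> xN yN zN xy xz yz YW Y0 hn.
have hb := Fl_bound x y Y.
case hA: ((x \in Y) && (y \in Y)); case hB: ((th x \in Y) && (th y \in Y));
  rewrite ?hA ?hB /nat_of_bool ?addn0 ?add0n in hb; rewrite -ltnNge in hn.
- move/andP: hA => [x1 y1]; move/andP: hB => [x1' y1'].
  have h3 : 2 * #|Y| <= ec Y + 3 by move: hn hb; clear; lia.
  case: (boolP ((z \in Y) || (th z \in Y))) => hz.
    left; exists (Y :&: th @: Y).
    have hU : ec (Y :|: th @: Y) + 4 <= 2 * #|Y :|: th @: Y|.
      by apply: (F4 xN yN zN xy xz yz (UW YW (thW YW))); case/orP: hz => hz; mm.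
    have k1 := supW E Y (th @: Y); have k2 := cardsUI Y (th @: Y).
    have k3 := ec_th Hinv HE Y; have k4 := card_th Hinv Y.
    split; [exact: IW | mm | mm | ].
    by move: hU h3 k1 k2 k3 k4; clear; lia.
  right; exists Y; move: hz; rewrite negb_or => /andP[z1 z1'].
  by split.
- left; exists Y; move/andP: hA => [x1 y1]; split=> //.
  by move: hn hb; clear; lia.
- left; exists (th @: Y); move/andP: hB => [x1' y1'].
  have k3 := ec_th Hinv HE Y; have k4 := card_th Hinv Y.
  split; [exact: thW | mm | mm | ].
  by move: hn hb k3 k4; clear; lia.
- case/set0Pn: Y0 => w wY.
  have k := F2 YW wY.
  by move: hn hb k; clear; lia.
Qed.


Hypothesis Hcnt : #|E| + 2 = 2 * #|V|.

Lemma thsub (e : {set T}) : (th @: e \subset W) = (e \subset W).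
Proof.
apply/idP/idP=> h; apply/subsetP=> w wI.
  by rewrite -memW_th; apply: (subsetP h); rewrite mem_thS Hinv.
by rewrite -memW_th; apply: (subsetP h); rewrite -mem_thS.
Qed.

Lemma th_eq (e S : {set T}) : (th @: e == S) = (e == th @: S).
Proof. by apply/eqP/eqP=> h; [rewrite -h thK_set | rewrite h thK_set]. Qed.

Lemma nb_thv_eq : nbhd V E (th v) = th @: N.
Proof.
apply/setP=> w; rewrite mem_thS !inE HV -(edge_th HE v (th w)) Hinv.
by [].
Qed.

Lemma card_nb' : #|N| = 3 -> #|nbhd V E (th v)| = 3.
Proof. by rewrite nb_thv_eq card_th. Qed.

Lemma nb'_edge u : u \in nbhd V E (th v) -> [set th v; u] \in E.
Proof. by rewrite inE => /andP[]. Qed.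

Lemma nb'_V u : u \in nbhd V E (th v) -> u \in V.
Proof. by rewrite inE => /andP[]. Qed.

Lemma inj_star w (S : {set T}) : (forall u, u \in S -> [set w; u] \in E) ->
  {in S &, injective (fun u => [set w; u])}.
Proof.
move=> Hw u1 u2 u1S u2S h.
have : u1 \in [set w; u2] by rewrite -h !inE eqxx orbT.
rewrite !inE => /orP[/eqP u1w|/eqP //].
by move: (card2_edge (Hw _ u1S)); rewrite u1w cards2 eqxx.
Qed.

Lemma count_E : #|N| = 3 -> #|edg E W| + 6 = #|E|.
Proof.
move=> H3.
set Sv := [set [set v; u] | u in N].
set Sv' := [set [set th v; u] | u in nbhd V E (th v)].
have c1 : #|Sv| = 3 by rewrite card_in_imset ?H3 //; apply: inj_star; apply: nb_edge.
have c2 : #|Sv'| = 3 by rewrite card_in_imset ?card_nb' //; apply: inj_star; apply: nb'_edge.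
have d12 : Sv :&: Sv' = set0.
  apply/eqP; rewrite -subset0; apply/subsetP=> e; rewrite inE => /andP[/imsetP[u1 u1N ->]].
  case/imsetP=> u2 u2N h.
  have : v \in [set th v; u2] by rewrite -h !inE eqxx.
  rewrite !inE => /orP[/eqP h'|/eqP h'].
    by move: thv_v; rewrite -h' eqxx.
  move: (nb'_edge u2N); rewrite -h' => hE.
  move: (Hfe hE); rewrite th_set2 Hinv setUC eqxx.
  by [].
have hNE : [set e in E | ~~ (e \subset W)] = Sv :|: Sv'.
  apply/setP=> e; rewrite !inE; apply/idP/idP.
    case/andP=> eE eW.
    have [eV] := Hsimple eE; move/eqP/cards2P=> [p [q [pq ep]]].
    move: eW eV; rewrite ep !sub2 negb_and => /orP[] pW /andP[pV qV].
    + move: pW; rewrite memW pV andbT negb_and !negbK => /orP[/eqP pv|/eqP pv].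
        apply/orP; left; apply/imsetP; exists q => //.
          by rewrite inE qV -pv -ep.
        by rewrite pv.
      apply/orP; right; apply/imsetP; exists q => //.
        by rewrite inE qV -pv -ep.
      by rewrite pv.
    + move: pW; rewrite memW qV andbT negb_and !negbK => /orP[/eqP qv|/eqP qv].
        apply/orP; left; apply/imsetP; exists p => //.
          by rewrite inE pV -qv setUC -ep.
        by rewrite qv setUC.
      apply/orP; right; apply/imsetP; exists p => //.
        by rewrite inE pV -qv setUC -ep.
      by rewrite qv setUC.
  case/orP=> /imsetP[u uN ->].
    rewrite nb_edge //= sub2 negb_and; apply/orP; left.
    by rewrite memW eqxx.
  rewrite nb'_edge //= sub2 negb_and; apply/orP; left.
  by rewrite memW eqxx andbF.
have hp : edg E W :|: [set e in E | ~~ (e \subset W)] = E.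
  by apply/setP=> e; rewrite !inE; case: (e \in E); case: (e \subset W).
have hi : edg E W :&: [set e in E | ~~ (e \subset W)] = set0.
  apply/setP=> e; rewrite !inE.
  by case: (e \in E); case: (e \subset W).
have := cardsUI (edg E W) [set e in E | ~~ (e \subset W)].
rewrite hp hi cards0 hNE.
have := cardsUI Sv Sv'; rewrite d12 cards0 c1 c2.
move=> h1 h2; clearbody Sv Sv'; move: h1 h2; clear; unfold reverse_coercion; lia.
Qed.

Lemma card_W : #|W| + 2 = #|V|.
Proof.
have nv : v != th v by rewrite eq_sym thv_v.
rewrite /red_V cardsD.
have -> : V :&: [set v; th v] = [set v; th v].
  by apply/setIidPr; rewrite sub2 Hv HV Hv.
rewrite cards2 nv.
have : [set v; th v] \subset V by rewrite sub2 Hv HV Hv.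
move/subset_leq_card; rewrite cards2 nv.
clear; lia.
Qed.

Lemma construct x y : #|N| = 3 -> x \in N -> y \in N -> x != y -> [set x; y] \notin E ->
  good x y -> Ci_tight W (red_E V E th v x y) th.
Proof.
move=> H3 xN yN xy xyE hg.
have ne := neq_edges xN yN.
have xyE' : [set th x; th y] \notin E by rewrite (edge_th HE).
split.
- split.
  + move=> e; rewrite /red_E !inE => /orP[/andP[eE eW]|/orP[/eqP->|/eqP->]].
    * by split=> //; apply: card2_edge.
    * by rewrite sub2 !nb_W // cards2 xy.
    * by rewrite sub2 !nb_thW // cards2 (inj_eq (can_inj Hinv)) xy.
  + exact: Hinv.
  + exact: memW_th.
  + move=> e; rewrite /red_E !inE HE thsub !th_eq !th_set2 !Hinv.
    by rewrite [X in _ || X]orbC.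
- split.
  + move=> V' E' V'0 V'W E'R E'V'.
    move/forallP: hg => /(_ V'); rewrite V'W V'0 /= => hg.
    have hs : E' \subset edg E V' :|: Fl x y V'.
      apply/subsetP=> e eE'; move: (subsetP E'R e eE') (E'V' e eE').
      rewrite /red_E !inE => /orP[/andP[eE _]|/orP[/eqP ee|/eqP ee]] eV.
      * by rewrite eE eV.
      * by rewrite ee eqxx /= -ee eV orbT.
      * by rewrite ee eqxx orbT /= -ee eV orbT.
    have a := subset_leq_card hs; have b := cardsUI (edg E V') (Fl x y V').
    apply: leq_trans hg; rewrite leq_add2r /ec -b.
    exact: leq_trans a (leq_addr _ _).
  + have hd : edg E W :&: [set [set x; y]; [set th x; th y]] = set0.
      apply/eqP; rewrite -subset0; apply/subsetP=> e; rewrite !inE.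
      by case/andP=> /andP[eE _] /orP[]/eqP ee; move: eE; rewrite ee ?(negbTE xyE) ?(negbTE xyE').
    have hr : red_E V E th v x y = edg E W :|: [set [set x; y]; [set th x; th y]] by [].
    have h1 := cardsUI (edg E W) [set [set x; y]; [set th x; th y]].
    rewrite hd cards0 cards2 ne /= in h1.
    have h2 := count_E H3; have h3 := card_W.
    rewrite hr; move: h1 h2 h3 Hcnt; rewrite /ec.
    set n1 := #|edg E W|; set n2 := #|E|; set n3 := #|W|; set n4 := #|V|.
    set n5 := #|edg E W :|: _|.
    clearbody n1 n2 n3 n4 n5; clear; lia.
- by move=> w; rewrite memW => /and3P[_ _]; apply: Hfv.
- move=> e; rewrite /red_E !inE => /orP[/andP[eE _]|/orP[/eqP->|/eqP->]].
  + exact: Hfe.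
  + by rewrite th_set2 eq_sym.
  + by rewrite th_set2 !Hinv.
Qed.


Definition Bl x y z := (exists Y, Tb x y Y) \/ (exists Y, Qb x y z Y).

Lemma Bl_sym x y z : Bl x y z -> Bl y x z.
Proof. by case=> [[Y /Tsym h]|[Y /Qsym h]]; [left|right]; exists Y. Qed.

Lemma step x y z : x \in N -> y \in N -> z \in N -> x != y -> x != z -> y != z ->
  #|N| = 3 -> [set x; y] \notin E ->
  (exists x y, [/\ x \in N, y \in N, x != y, [set x; y] \notin E &
        Ci_tight W (red_E V E th v x y) th]) \/ Bl x y z.
Proof.
move=> xN yN zN xy xz yz H3 nxy.
case: (boolP (good x y)) => g.
  by left; exists x, y; split=> //; apply: construct.
right; move/forallPn: g => [Y]; rewrite !negb_imply => /andP[YW /andP[Y0 hn]].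
exact: (norm xN yN zN xy xz yz YW Y0 hn).
Qed.

Lemma one_ne s t u : s \in N -> t \in N -> u \in N -> s != t -> s != u -> t != u ->
  [set s; u] \in E -> [set t; u] \in E -> Bl s t u -> False.
Proof.
move=> sN tN uN st su tu e1 e2 [[Y h]|[Y h]].
  exact: (T1 sN tN uN st su tu h e1 e2).
exact: (Q1 sN tN uN st su tu h e1 e2).
Qed.

Lemma two_ne s t u : s \in N -> t \in N -> u \in N -> s != t -> s != u -> t != u ->
  [set t; u] \in E -> Bl s t u -> Bl s u t -> False.
Proof.
move=> sN tN uN st su tu e [[Y1 h1]|[Y1 h1]] [[Y2 h2]|[Y2 h2]].
- exact: (TT sN tN uN st su tu h1 h2).
- exact: (TQ sN tN uN st su tu h1 h2).
- by apply: (TQ sN uN tN su st _ h2 h1); rewrite eq_sym.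
- exact: (QQe sN tN uN st su tu h1 h2 e).
Qed.

Lemma three_ne a b c : a \in N -> b \in N -> c \in N -> a != b -> a != c -> b != c ->
  Bl a b c -> Bl a c b -> Bl b c a -> False.
Proof.
move=> aN bN cN ab ac bc [[Y1 h1]|[Y1 h1]] [[Y2 h2]|[Y2 h2]] [[Y3 h3]|[Y3 h3]];
  have ba : b != a by rewrite eq_sym.
all: have ca : c != a by rewrite eq_sym.
all: have cb : c != b by rewrite eq_sym.
- exact: (TT aN bN cN ab ac bc h1 h2).
- exact: (TT aN bN cN ab ac bc h1 h2).
- exact: (TQ aN bN cN ab ac bc h1 h2).
- exact: (TQ aN bN cN ab ac bc h1 h2).
- exact: (TQ aN cN bN ac ab cb h2 h1).
- exact: (TQ aN cN bN ac ab cb h2 h1).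
- exact: (TQ bN cN aN bc ba ca h3 (Qsym h1)).
- exact: (QQQ aN bN cN ab ac bc h1 h2 h3).
Qed.


Lemma main_v : #|N| = 3 -> induced_iso_K4 E (v |: N) \/
  exists x y : T,
    [/\ x \in N, y \in N, x != y, [set x; y] \notin E &
        Ci_tight W (red_E V E th v x y) th].
Proof.
move=> H3; have [a [b [c [ab ac bc HN]]]] := card3_ex H3.
have aN : a \in N by rewrite HN !inE eqxx.
have bN : b \in N by rewrite HN !inE eqxx orbT.
have cN : c \in N by rewrite HN !inE eqxx orbT.
have ba : b != a by rewrite eq_sym.
have ca : c != a by rewrite eq_sym.
have cb : c != b by rewrite eq_sym.
have sw x y : ([set x; y] \in E) = ([set y; x] \in E) by rewrite setUC.
case eab: ([set a; b] \in E); case eac: ([set a; c] \in E); case ebc: ([set b; c] \in E).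
- left; rewrite HN; apply: K4_lem; rewrite ?eab ?eac ?ebc //;
    try (by apply: nb_edge); by rewrite eq_sym; apply: nb_neq_v.
- have [R|B1] := step bN cN aN bc ba ca H3 (negbT ebc); first by right.
  by case: (one_ne bN cN aN bc ba ca _ _ B1); rewrite sw.
- have [R|B1] := step aN cN bN ac ab cb H3 (negbT eac); first by right.
  by case: (one_ne aN cN bN ac ab cb _ _ B1); rewrite // sw.
- have n1 : [set c; a] \notin E by rewrite sw eac.
  have n2 : [set c; b] \notin E by rewrite sw ebc.
  have [R|B1] := step cN aN bN ca cb ab H3 n1; first by right.
  have [R|B2] := step cN bN aN cb ca ba H3 n2; first by right.
  by case: (two_ne cN aN bN ca cb ab eab B1 B2).
- have [R|B1] := step aN bN cN ab ac bc H3 (negbT eab); first by right.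
  exact: False_ind (one_ne aN bN cN ab ac bc eac ebc B1).
- have n1 : [set b; a] \notin E by rewrite sw eab.
  have [R|B1] := step bN aN cN ba bc ac H3 n1; first by right.
  have [R|B2] := step bN cN aN bc ba ca H3 (negbT ebc); first by right.
  by case: (two_ne bN aN cN ba bc ac eac B1 B2).
- have [R|B1] := step aN bN cN ab ac bc H3 (negbT eab); first by right.
  have [R|B2] := step aN cN bN ac ab cb H3 (negbT eac); first by right.
  by case: (two_ne aN bN cN ab ac bc ebc B1 B2).
- have [R|B1] := step aN bN cN ab ac bc H3 (negbT eab); first by right.
  have [R|B2] := step aN cN bN ac ab cb H3 (negbT eac); first by right.
  have [R|B3] := step bN cN aN bc ba ca H3 (negbT ebc); first by right.
  by case: (three_ne aN bN cN ab ac bc B1 B2 B3).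
Qed.

End Vsec.


Theorem lemma5p4 (T : finType) (V : {set T}) (E : {set {set T}}) (th : T -> T) (v : T) :
  Ci_tight V E th -> v \in V ->
  #|nbhd V E v| = 3 ->
  nbhd V E v :&: nbhd V E (th v) = set0 ->
  induced_iso_K4 E (v |: nbhd V E v) \/
  exists x y : T,
    [/\ x \in nbhd V E v, y \in nbhd V E v, x != y, [set x; y] \notin E &
        Ci_tight (red_V V th v) (red_E V E th v x y) th].
Proof.
move=> [[Hsimple Hinv HV HE] [Hsp Hcnt] Hfv Hfe] Hv H3 Hdisj.
exact: (main_v Hsimple Hinv HV HE Hsp Hfv Hfe Hv Hdisj Hcnt H3).
Qed.
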